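(* If $C_1,C_2\subseteq\mathbb{F}_2^n$ are binary linear constant weight codes of the same dimension and the same weight, then they are permutation equivalent, i.e. there is $\sigma\in S_n$ with $\sigma(C_1)=C_2$.
   Context: A binary linear code of length $n$ is an $\mathbb{F}_2$-subspace of $\mathbb{F}_2^n$; it is a constant weight code of weight $w$ if every non-zero codeword has Hamming weight $w$. The symmetric group $S_n$ acts on $\mathbb{F}_2^n$ by $\sigma(v_1,\dots,v_n)=(v_{\sigma^{-1}(1)},\dots,v_{\sigma^{-1}(n)})$. *)

(* Defs.v *)
From mathcomp Require Import all_boot all_order all_algebra all_fingroup.
Set Implicit Arguments. Unset Strict Implicit. Unset Printing Implicit Defensive.
Import GRing.Theory.
Local Open Scope ring_scope.

Definition hweight (n : nat) (v : 'rV['F_2]_n) : nat := #|[set i | v 0 i != 0]|.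

Definition constant_weight (n : nat) (C : {vspace 'rV['F_2]_n}) (w : nat) : Prop :=
  forall v, v \in C -> v != 0 -> hweight v = w.

Definition perm_act (n : nat) (s : 'S_n) (v : 'rV['F_2]_n) : 'rV['F_2]_n :=
  \row_i v 0 ((s^-1)%g i).

(* Main.v *)
Require Import Defs.
From mathcomp Require Import all_boot all_order all_algebra all_fingroup ring.
Set Implicit Arguments. Unset Strict Implicit. Unset Printing Implicit Defensive.
Import GRing.Theory Num.Theory.
Local Open Scope ring_scope.

Definition chi (a : 'F_2) : int := 1 - 2 * (a != 0)%:R.

Lemma chiD a b : chi (a + b) = chi a * chi b.
Proof. by move: a b; do 2!case=> [[|[|//]]] ?; rewrite /chi /=. Qed.

Lemma chi0 : chi 0 = 1. Proof. by []. Qed.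

Lemma chi_neq a : a != 0 -> chi a = -1.
Proof. by move: a; case=> [[|[|//]]] ?. Qed.

Section Dot.
Variable k : nat.
Definition dot (m y : 'rV['F_2]_k) : 'F_2 := \sum_i m 0 i * y 0 i.

Lemma dotDl m e y : dot (m + e) y = dot m y + dot e y.
Proof. by rewrite /dot -big_split; apply: eq_bigr => i _; rewrite mxE mulrDl. Qed.
Lemma dotDr m x y : dot m (x + y) = dot m x + dot m y.
Proof. by rewrite /dot -big_split; apply: eq_bigr => i _; rewrite mxE mulrDr. Qed.
Lemma dot0r m : dot m 0 = 0.
Proof. by rewrite /dot big1 // => i _; rewrite mxE mulr0. Qed.
Lemma dot0l m : dot 0 m = 0.
Proof. by rewrite /dot big1 // => i _; rewrite mxE mul0r. Qed.

Lemma sum_chi (y : 'rV['F_2]_k) :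
  \sum_(m : 'rV['F_2]_k) chi (dot m y) = if y == 0 then #|{: 'rV['F_2]_k}|%:R else 0.
Proof.
case: eqP => [->|/eqP].
  by rewrite (eq_bigr (fun _ => 1)) ?sumr_const // => m _; rewrite dot0r.
move=> yn0.
have [i yi] : exists i, y 0 i != 0.
  apply/existsP; apply: contraNT yn0; rewrite negb_exists => /forallP H.
  by apply/eqP/rowP => j; rewrite mxE; apply/eqP; move: (H j); rewrite negbK.
pose e : 'rV['F_2]_k := delta_mx 0 i.
have de : dot e y = y 0 i.
  rewrite /dot (bigD1 i) //= big1 ?addr0; first by rewrite mxE !eqxx mul1r.
  by move=> j ji; rewrite mxE eqxx (negbTE ji) mul0r.
set S := \sum_m _.
have : S = - S.
  rewrite {1}/S (reindex_inj (addrI e)) /= -sumrN; apply: eq_bigr => m _.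
  by rewrite addrC dotDl chiD de [chi (y 0 i)]chi_neq // mulrN1.
move/eqP; rewrite -subr_eq0 opprK -mulr2n mulrn_eq0 /= => /eqP //.
Qed.
End Dot.
Lemma oppF2 (a : 'F_2) : - a = a.
Proof. by move: a; case=> [[|[|//]]] ?; apply/val_inj. Qed.

Lemma addF2_eq0 k (x y : 'rV['F_2]_k) : (x + y == 0) = (y == x).
Proof.
rewrite addr_eq0 eq_sym; congr (_ == _); apply/rowP => j; by rewrite mxE oppF2.
Qed.

Lemma sum_nat_card (I : finType) (P : pred I) :
  \sum_(j : I) ((P j)%:R : int) = #|P|%:R.
Proof.
rewrite -sum1_card natr_sum [in RHS]big_mkcond; apply: eq_bigr => j _.
by rewrite -topredE /=; case: (P j).
Qed.

Lemma sumT k n (c : 'I_n -> 'rV['F_2]_k) m :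
  \sum_j chi (dot m (c j)) = n%:R - 2 * #|[pred j | dot m (c j) != 0]|%:R.
Proof.
rewrite /chi sumrB sumr_const card_ord -mulr_sumr.
by rewrite (sum_nat_card [pred j | dot m (c j) != 0]).
Qed.

Lemma count_id k n w (c : 'I_n -> 'rV['F_2]_k) :
  (forall m, m != 0 -> #|[pred j | dot m (c j) != 0]| = w) ->
  forall x, #|{: 'rV['F_2]_k}|%:R * (#|[pred j | c j == x]|%:R : int)
    = (n%:R - 2 * w%:R) * (\sum_m chi (dot m x)) + 2 * w%:R.
Proof.
move=> Hw x.
have E1 : \sum_m chi (dot m x) * (\sum_j chi (dot m (c j)))
   = #|{: 'rV['F_2]_k}|%:R * (#|[pred j | c j == x]|%:R : int).
  under eq_bigr => m _ do rewrite mulr_sumr.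
  rewrite exchange_big /=.
  under eq_bigr => j _ do (under eq_bigr => m _ do rewrite -chiD -dotDr; rewrite sum_chi addF2_eq0).
  rewrite -(sum_nat_card [pred j | c j == x]) mulr_sumr; apply: eq_bigr => j _ /=.
  by case: (c j == x); rewrite ?mulr1 ?mulr0.
rewrite -E1 (bigD1 0) //= [in RHS](bigD1 0) //= dot0l sumT.
have -> : #|[pred j | dot 0 (c j) != 0]| = 0%N.
  by apply: eq_card0 => j; rewrite inE dot0l eqxx.
rewrite (eq_bigr (fun m => chi (dot m x) * (n%:R - 2 * w%:R))); last first.
  by move=> m m0; rewrite sumT Hw.
rewrite -mulr_suml chi0; ring.
Qed.
Definition enc k n (c : 'I_n -> 'rV['F_2]_k) (m : 'rV['F_2]_k) : 'rV['F_2]_n :=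
  \row_j dot m (c j).

Lemma param n (C : {vspace 'rV['F_2]_n}) k : \dim C = k ->
  exists c : 'I_n -> 'rV['F_2]_k,
    (forall v, v \in C <-> exists m, v = enc c m) /\
    (forall m, m != 0 -> enc c m != 0).
Proof.
move=> <-; set b := vbasis C.
exists (fun j => \row_i b`_i 0 j).
have encE m : enc (fun j => \row_i b`_i 0 j) m = \sum_i m 0 i *: b`_i.
  apply/rowP => j; rewrite !mxE summxE; apply: eq_bigr => i _; rewrite !mxE //.
split.
  move=> v; split.
    move=> vC; exists (\row_i coord b i v); rewrite encE {1}(coord_vbasis vC).
    by apply: eq_bigr => i _; rewrite mxE.
  case=> m ->; rewrite encE; apply: memv_suml => i _; apply: memvZ.
  by apply: vbasis_mem; apply: mem_nth; rewrite size_tuple.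
move=> m; apply: contraNN; rewrite encE => /eqP H.
apply/eqP/rowP => i; rewrite mxE.
by move/freeP: (basis_free (vbasisP C)) => /(_ (fun i => m 0 i) H i).
Qed.

Lemma count_card n (T : eqType) (c : 'I_n -> T) x :
  count_mem x (map c (enum 'I_n)) = #|[pred j | c j == x]|.
Proof. by rewrite count_map cardE /enum_mem size_filter count_filter; apply: eq_count => j; rewrite /= !inE andbT. Qed.

Theorem theorem4p3 (n : nat) (C1 C2 : {vspace 'rV['F_2]_n}) (w : nat) :
  \dim C1 = \dim C2 ->
  constant_weight C1 w -> constant_weight C2 w ->
  exists s : 'S_n, forall v : 'rV['F_2]_n,
    (v \in C2) <-> (exists2 u, u \in C1 & v = perm_act s u).
Proof.
move=> dimE cw1 cw2.
have [c1 [H1 N1]] := param (erefl (\dim C1)).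
have [c2 [H2 N2]] := param (esym dimE).
have W (C : {vspace 'rV['F_2]_n}) c : constant_weight C w ->
    (forall v, v \in C <-> exists m, v = enc c m) ->
    (forall m, m != 0 -> enc c m != 0) ->
    forall m, m != 0 -> #|[pred j | dot m (c j) != 0]| = w.
  move=> cw H N m m0; rewrite -(cw (enc c m)); last exact: N.
    rewrite /hweight cardsE; apply: eq_card => j; by rewrite !inE -topredE /= /enc mxE.
  by apply/H; exists m.
have cnt x : #|[pred j | c1 j == x]| = #|[pred j | c2 j == x]|.
  have := count_id (W _ _ _ cw1 H1 N1) x; rewrite -(count_id (W _ _ _ cw2 H2 N2) x).
  have Nn0 : (#|{: 'rV['F_2]_(\dim C1)}|%:R : int) != 0.
    by rewrite pnatr_eq0 -lt0n; apply/card_gt0P; exists 0.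
  by move/(mulfI Nn0)/eqP; rewrite eqr_nat => /eqP.
have pe : perm_eq [tuple c1 j | j < n] [tuple c2 j | j < n].
  apply/allP => x _ /=; apply/eqP.
  by rewrite !count_card cnt.
have [p Hp] := tuple_permP pe.
have cp j : c1 j = c2 (p j).
  have Hp2 : [tuple c1 j | j < n] = [tuple tnth [tuple c2 j | j < n] (p i) | i < n] by apply: val_inj.
  have := congr1 (fun t : n.-tuple _ => tnth t j) Hp2.
  by rewrite /= !tnth_mktuple.
have eP m : perm_act p (enc c1 m) = enc c2 m.
  by apply/rowP => i; rewrite !mxE cp permKV.
exists p => v; split.
  move/H2 => [m ->]; exists (enc c1 m); last by rewrite eP.
  by apply/H1; exists m.
by move=> [u /H1 [m ->] ->]; apply/H2; exists m; rewrite eP.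
Qed.
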